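(* Let $n\ge k\ge 1$ and let $\mathbf{M}$ be a $k\times n$ binary matrix all of whose rows have Hamming weight exactly $n-k+1$ and which satisfies the MDS Condition. For $i\in[k]$ let $Z_i=\{j\in[n]: m_{i,j}=0\}$ (so $|Z_i|=k-1$). Suppose that the family $(Z_1,\ldots,Z_k)$ has a unique multiset union. Then for every prime power $q\geq n+k-1$ there exists an $[n,k]_q$ MDS code having a generator matrix that fits $\mathbf{M}$. In particular, if every family of $(k-1)$-subsets $Z_1,\dots,Z_k$ of $[n]$ satisfying $|\bigcap_{i\in I}Z_i|\le k-|I|$ for all nonempty $I\subseteq[k]$ (for all $n\ge k\ge1$) has a unique multiset union, then for all such $\mathbf{M}$ and all prime powers $q\ge n+k-1$ such an MDS code exists.
   Context: $[n]=\{1,\ldots,n\}$. For a $k\times n$ binary matrix $\mathbf{M}=(m_{i,j})$ with rows $\mathbf{M}_i$, ${\sf supp}(\mathbf{M}_i)=\{j: m_{i,j}\ne 0\}$; $\mathbf{M}$ satisfies the MDS Condition if $|\bigcup_{i\in I}{\sf supp}(\mathbf{M}_i)|\ge n-k+|I|$ for all nonempty $I\subseteq[k]$. A matrix $\mathbf{G}=(g_{i,j})\in\mathbb{F}_q^{k\times n}$ fits $\mathbf{M}$ if $g_{i,j}=0$ whenever $m_{i,j}=0$. An $[n,k]_q$ MDS code is a $k$-dimensional linear code in $\mathbb{F}_q^n$ with minimum distance $n-k+1$. Multiset unions: given $(k-1)$-subsets $Z_1,\ldots,Z_k$ of $[n]$, a choice is a pair $(\sigma,(S_1,\ldots,S_k))$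 where $\sigma$ is a permutation of $[k]$ and $S_i\subseteq Z_i$ with $|S_i|=\sigma(i)-1$ for each $i$; its multiset union is the multiset $S_1\uplus\cdots\uplus S_k$ (multiplicity of $j$ = number of $i$ with $j\in S_i$). The family $(Z_1,\ldots,Z_k)$ has a unique multiset union if there is a multiset that arises as the multiset union of exactly one choice. *)

(* Defs.v *)
(* Indices [n] = 'I_n (0-based), [k] = 'I_k. *)
From HB Require Import structures.
From mathcomp Require Import all_boot all_order all_algebra all_fingroup.
Set Implicit Arguments. Unset Strict Implicit. Unset Printing Implicit Defensive.
Import GRing.Theory.
Local Open Scope ring_scope.

Definition supp_row (k n : nat) (M : 'M[bool]_(k, n)) (i : 'I_k) : {set 'I_n} :=
  [set j | M i j].

Definition zero_row (k n : nat) (M : 'M[bool]_(k, n)) (i : 'I_k) : {set 'I_n} :=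
  [set j | ~~ M i j].

Definition MDS_condition (k n : nat) (M : 'M[bool]_(k, n)) : Prop :=
  forall I : {set 'I_k}, I != set0 ->
    (n - k + #|I| <= #|\bigcup_(i in I) supp_row M i|)%N.

Definition fits (F : fieldType) (k n : nat) (G : 'M[F]_(k, n)) (M : 'M[bool]_(k, n)) : Prop :=
  forall i j, ~~ M i j -> G i j = 0.

Definition hweight (F : fieldType) (n : nat) (v : 'rV[F]_n) : nat :=
  #|[set j : 'I_n | v 0 j != 0]|.

(* G (k x n) generates an [n,k] MDS code: its rows are linearly independent
   (so the code, its row space, has dimension k) and the minimum distance of the
   linear code {u G}, i.e. the least weight of a nonzero codeword, is n-k+1. *)
Definition MDS_generator (F : fieldType) (k n : nat) (G : 'M[F]_(k, n)) : Prop :=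
  row_free G /\
  (forall c : 'rV[F]_n, (c <= G)%MS -> c != 0 -> (n - k + 1 <= hweight c)%N) /\
  (exists2 c : 'rV[F]_n, (c <= G)%MS /\ c != 0 & hweight c = (n - k + 1)%N).

(* A choice (sigma, (S_1..S_k)) for the family Z: sigma a permutation of [k],
   S_i subset of Z_i with |S_i| = sigma(i) - 1 (0-based: |S_i| = val (sigma i)). *)
Definition valid_choice (k n : nat) (Z : 'I_k -> {set 'I_n})
  (sigma : 'S_k) (S : {ffun 'I_k -> {set 'I_n}}) : Prop :=
  forall i, S i \subset Z i /\ #|S i| = val (sigma i).

Definition mult_union (k n : nat) (S : {ffun 'I_k -> {set 'I_n}}) (j : 'I_n) : nat :=
  #|[set i : 'I_k | j \in S i]|.

Definition unique_multiset_union (k n : nat) (Z : 'I_k -> {set 'I_n}) : Prop :=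
  exists (sigma : 'S_k) (S : {ffun 'I_k -> {set 'I_n}}),
    valid_choice Z sigma S /\
    forall (sigma' : 'S_k) (S' : {ffun 'I_k -> {set 'I_n}}),
      valid_choice Z sigma' S' -> mult_union S' =1 mult_union S ->
      sigma' = sigma /\ S' = S.

(* Main.v *)
Require Import Defs.
From HB Require Import structures.
From mathcomp Require Import all_boot all_order all_algebra all_fingroup all_field.
From mathcomp Require Import mpoly.
From mathcomp Require Import zify.
From Stdlib Require Import Lia.
Set Implicit Arguments. Unset Strict Implicit. Unset Printing Implicit Defensive.
Import GRing.Theory.
Local Open Scope ring_scope.

Section Alon.
Variable F : finFieldType.
Variable n : nat.

Definition zj (j : 'I_n) (m : 'X_{1..n}) : 'X_{1..n} :=
  [multinom (if i == j then 0%N else m i) | i < n].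

Definition pt (p : {mpoly F[n]}) j (t : nat) : {mpoly F[n]} :=
  \sum_(m <- msupp p | m j == t) p@_m *: 'X_[zj j m].

Lemma meval_pt p j t (v : 'I_n -> F) :
  (pt p j t).@[v] = \sum_(m <- msupp p | m j == t) p@_m * \prod_i v i ^+ zj j m i.
Proof.
rewrite /pt rmorph_sum /=; apply: eq_bigr => m _.
by rewrite mevalZ mevalX.
Qed.

Lemma meval_split p j d (v : 'I_n -> F) :
  (forall m, m \in msupp p -> m j <= d)%N ->
  p.@[v] = \sum_(t < d.+1) (pt p j t).@[v] * v j ^+ t.
Proof.
move=> Hd.
under eq_bigr => t _ do rewrite meval_pt big_distrl /=.
rewrite mevalE.
under eq_bigr => t _ do rewrite big_mkcond /=.
rewrite exchange_big /= big_seq [RHS]big_seq.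
apply: eq_bigr => m Hm.
have Hmj : (m j < d.+1)%N by rewrite ltnS Hd.
rewrite [RHS](bigD1 (Ordinal Hmj)) //= eqxx [X in _ = _ + X]big1; last first.
  move=> t Ht; rewrite ifF //; apply/negbTE; apply: contra Ht => /eqP E.
  by apply/eqP/val_inj; rewrite /= E.
rewrite addr0 -mulrA; congr (_ * _).
rewrite (bigD1 j) //= [in RHS](bigD1 j) //= /zj mnmE eqxx expr0 mul1r mulrC.
congr (_ * _); apply: eq_bigr => i Hi; rewrite mnmE (negbTE Hi) //.
Qed.

Lemma meval_pt_indep p j t (v w : 'I_n -> F) :
  (forall i, i != j -> v i = w i) -> (pt p j t).@[v] = (pt p j t).@[w].
Proof.
move=> Hvw; rewrite !meval_pt; apply: eq_bigr => m _; congr (_ * _).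
apply: eq_bigr => i _; rewrite /zj mnmE; case: eqP => [//|/eqP Hi].
by rewrite Hvw.
Qed.

Lemma msupp_pt p j t m' : m' \in msupp (pt p j t) ->
  exists2 m, m \in msupp p & m' = zj j m.
Proof.
move/msupp_sum_le; case/flattenP => s /mapP [m]; rewrite mem_filter.
case/andP => _ Hm -> /msuppZ_le; rewrite msuppX inE => /eqP ->.
by exists m.
Qed.

Lemma pt_coeff p j m0 : m0 \in msupp p -> (pt p j (m0 j))@_(zj j m0) = p@_m0.
Proof.
move=> Hm0; rewrite /pt raddf_sum /=.
under eq_bigr => m _ do rewrite mcoeffZ mcoeffX.
rewrite (big_rem m0) //= !eqxx mulr1 big1_seq ?addr0 // => m.
case/andP => Hmj Hm; case: (eqVneq (zj j m) (zj j m0)) => [E|]; last first.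
  by rewrite mulr0.
have Em : m = m0.
  apply/mnmP => i; case: (eqVneq i j) => [-> | Hi]; first exact/eqP.
  by move/mnmP: E => /(_ i); rewrite !mnmE (negbTE Hi).
move: Hm; rewrite Em => Hm.
by move: Hm; rewrite (mem_rem_uniq _ (msupp_uniq p)) inE eqxx.
Qed.


Lemma alon_base p (v : 'I_n -> F) : p != 0 ->
  (forall m, m \in msupp p -> m = 0%MM) -> p.@[v] != 0.
Proof.
move=> p0 H0; have Hs : msupp p = [:: 0%MM].
  have U := msupp_uniq p; have : msupp p != [::] by rewrite msupp_eq0.
  move: H0 U; case: (msupp p) => [//|a s] Hall /= /andP [Ha _] _.
  rewrite (Hall a (mem_head _ _)); case: s Hall Ha => [//|b s] Hall.
  by rewrite (Hall a) ?inE ?eqxx // (Hall b) ?inE ?eqxx ?orbT.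
rewrite mevalE Hs big_seq1.
under eq_bigr => i _ do rewrite mnm0E expr0.
rewrite big1_eq mulr1 -mcoeff_msupp Hs mem_head //.
Qed.

Lemma exists_good (g : {poly F}) (B : {set F}) : g != 0 ->
  ((size g).-1 + #|B| < #|F|)%N -> exists y, ~~ root g y /\ y \notin B.
Proof.
move=> g0 Hc.
suff /existsP [y /andP [H1 H2]] : [exists y, ~~ root g y && (y \notin B)] by exists y.
apply: contraT => /existsPn H.
set Rt := [set y | root g y].
have HR : (#|Rt| <= (size g).-1)%N.
  have Ha : all (root g) (enum Rt) by apply/allP => y; rewrite mem_enum inE.
  have := max_poly_roots g0 Ha (enum_uniq _); rewrite cardE; by case: (size g).
have : (#|F| <= #|Rt :|: B|)%N.
  rewrite -cardsT subset_leq_card //; apply/subsetP => y _.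
  move: (H y); rewrite negb_and !negbK inE => /orP [r|b].
    by rewrite inE r.
  by rewrite b orbT.
move: (cardsU Rt B); lia.
Qed.

End Alon.

Lemma alon (F : finFieldType) n d (p : {mpoly F[n]}) :
  (d + n <= #|F|)%N -> p != 0 -> (forall m, m \in msupp p -> forall j, m j <= d)%N ->
  exists v : 'I_n -> F, injective v /\ p.@[v] != 0.
Proof.
move=> HF.
have v0 : exists v : 'I_n -> F, injective v.
  have Hn : (n <= #|F|)%N by lia.
  exists (fun i => @enum_val F F (widen_ord Hn i)).
  by move=> i1 i2 /enum_val_inj /(congr1 val) /= /val_inj.
suff H : forall N (A : {set 'I_n}) p, (#|A| <= N)%N -> p != 0 ->
  (forall m, m \in msupp p -> forall j, (m j <= d)%N /\ (j \notin A -> m j = 0%N)) ->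
  exists v : 'I_n -> F, injective v /\ p.@[v] != 0.
  move=> p0 Hp; apply: (H #|[set: 'I_n]| setT) => // m Hm j; split; first exact: Hp.
  by rewrite inE.
elim=> [|N IH] A q HA q0 Hq.
  have A0 : A = set0 by apply/eqP; rewrite -cards_eq0 -leqn0.
  case: v0 => v vi; exists v; split => //; apply: alon_base => // m Hm.
  by apply/mnmP => j; rewrite mnm0E; apply: (proj2 (Hq m Hm j)); rewrite A0 inE.
case: (set_0Vmem A) => [A0|[j jA]].
  case: v0 => v vi; exists v; split => //; apply: alon_base => // m Hm.
  by apply/mnmP => j; rewrite mnm0E; apply: (proj2 (Hq m Hm j)); rewrite A0 inE.
have m0s := mlead_supp q0; set m0 := mlead q in m0s.
set t := m0 j.
have pt0 : pt q j t != 0.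
  apply/eqP => E; move: (pt_coeff j m0s); rewrite E mcoeff0 => /esym/eqP.
  by rewrite mcoeff_eq0 m0s.
have [v [vi Hv]] : exists v : 'I_n -> F, injective v /\ (pt q j t).@[v] != 0.
  apply: (IH (A :\ j)) => //.
    by move: HA; rewrite (cardsD1 j A) jA; lia.
  move=> m' /msupp_pt [m Hm ->] i; rewrite /zj mnmE; case: eqP => [_|/eqP Hi].
    by [].
  split; first by case: (Hq m Hm i).
  rewrite !inE Hi /= => Hi2; exact: (proj2 (Hq m Hm i) Hi2).
pose g : {poly F} := \poly_(s < d.+1) (pt q j s).@[v].
have g0 : g != 0.
  apply/eqP => /(congr1 (fun r : {poly F} => r`_t)); rewrite coef_poly coef0.
  have -> : (t < d.+1)%N by rewrite ltnS; case: (Hq m0 m0s j).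
  by move/eqP; rewrite (negbTE Hv).
have Hn : (0 < n)%N by case: j {jA t pt0 Hv g g0} => j' /=; lia.
have [y [Hy1 Hy2]] : exists y, ~~ root g y /\ y \notin (v @: [set~ j]).
  apply: exists_good => //.
  have := leq_imset_card v [set~ j]; rewrite cardsC1 card_ord.
  have := size_poly d.+1 (fun s => (pt q j s).@[v]); rewrite -/g; move=> H1 H2; have H3 : ((size g).-1 <= d)%N by move: H1; case: (size g). 
  apply: (leq_ltn_trans (leq_add H3 H2)); apply: (leq_trans _ HF); rewrite -addnS leq_add2l; by case: (n) Hn.
pose w := fun i => if i == j then y else v i.
exists w; split.
  move=> i1 i2; rewrite /w; case: (eqVneq i1 j) => [->|H1]; case: (eqVneq i2 j) => [->|H2] //.
  - by move=> E; move: Hy2; rewrite E imset_f // !inE.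
  - by move=> E; move: Hy2; rewrite -E imset_f // !inE.
  - exact: vi.
rewrite (@meval_split F n q j d w); last by move=> m Hm; case: (Hq m Hm j).
move: Hy1; rewrite /root horner_poly; apply: contraNN => H.
rewrite (_ : \sum_(i < d.+1) _ = \sum_(t0 < d.+1) (pt q j t0).@[w] * w j ^+ t0) //.
apply: eq_bigr => s _; rewrite /w eqxx; congr (_ * _).
by apply: meval_pt_indep => i Hi; rewrite (negbTE Hi).
Qed.


Lemma prod_sub_expand (R : comNzRingType) (I : finType) (A : {set I}) (a : R) (b : I -> R) :
  \prod_(i in A) (a - b i) =
  \sum_(S : {set I} | S \subset A) (-1)^+#|S| * a^+(#|A| - #|S|) * \prod_(i in S) b i.
Proof.
rewrite big_mkcond /=.
rewrite (eq_bigr (fun i => (if i \in A then - b i else 0) + (if i \in A then a else 1))); last first.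
  by move=> i _; case: (i \in A); rewrite ?addr0 ?add0r // addrC.
rewrite bigA_distr (bigID (fun S : {set I} => S \subset A)) /= [X in _ + X]big1 ?addr0; last first.
  move=> J /subsetPn [i iJ iA]; rewrite (bigD1 i) //= iJ (negbTE iA) mul0r //.
apply: eq_bigr => J JA.
rewrite (bigID (fun i => i \in J)) /=.
rewrite (eq_bigr (fun i => - b i)); last by move=> i iJ; rewrite iJ (subsetP JA).
rewrite prodrN.
rewrite (eq_bigr (fun i => if i \in A :\: J then a else 1)); last first.
  by move=> i iJ; rewrite (negbTE iJ) inE iJ.
rewrite -big_mkcondr /=.
rewrite [X in _ * X = _](eq_bigl (fun i => i \in A :\: J)); last first.
  by move=> i /=; rewrite !inE; case: (i \in J).
rewrite prodr_const.
have -> : #|A :\: J| = (#|A| - #|J|)%N by rewrite cardsD (setIidPr JA).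
by rewrite -!mulrA [_ * a ^+ _]mulrC.
Qed.

Section Det.
Variables (F : fieldType) (k n : nat) (Z : 'I_k -> {set 'I_n}).

Definition famQ (s : 'S_k) := fun (i : 'I_k) (S : {set 'I_n}) => (S \subset Z i) && (#|S| == s i).
Definition mu (f : {ffun 'I_k -> {set 'I_n}}) : 'X_{1..n} := (\sum_i mesym1 (f i))%MM.
Definition Cm : 'M[{mpoly F[n]}]_k :=
  \matrix_(i, s) \sum_(S : {set 'I_n} | (S \subset Z i) && (#|S| == s)) 'X_[mesym1 S].

Lemma detCm : \det Cm = \sum_(s : 'S_k) \sum_(f in family (famQ s)) (-1)^+s * 'X_[mu f].
Proof.
rewrite /determinant; apply: eq_bigr => s _.
under eq_bigr => i _ do rewrite mxE.
rewrite (bigA_distr_big_dep (famQ s)) big_distrr /=.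
by apply: eq_bigr => f _; rewrite mprodXE.
Qed.

Lemma mu_mult f j : mu f j = mult_union f j.
Proof.
rewrite /mu mnm_sumE /mult_union -sum1_card [RHS]big_mkcond /=.
by apply: eq_bigr => i _; rewrite /mesym1 mnmE inE; case: (j \in f i).
Qed.

Lemma famQ_valid s f : (f \in family (famQ s)) -> valid_choice Z s f.
Proof.
by move/familyP => H i; move: (H i); rewrite /famQ unfold_in /= => /andP [-> /eqP ->].
Qed.

Lemma valid_famQ s f : valid_choice Z s f -> (f \in family (famQ s)).
Proof.
by move=> H; apply/familyP => i; rewrite /famQ unfold_in /=; case: (H i) => -> ->; rewrite eqxx.
Qed.


Lemma mcoeff_sign (b : bool) (p : {mpoly F[n]}) m : ((-1)^+b * p)@_m = (-1)^+b * p@_m.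
Proof. by case: b; rewrite ?expr0 ?expr1 ?mul1r ?mulN1r ?mcoeffN. Qed.

Lemma mu_eq f g : mu f = mu g -> mult_union f =1 mult_union g.
Proof. by move=> E j; rewrite -!mu_mult E. Qed.

Lemma coeff_detCm s0 S0 : valid_choice Z s0 S0 ->
  (forall s' S', valid_choice Z s' S' -> mult_union S' =1 mult_union S0 -> s' = s0 /\ S' = S0) ->
  (\det Cm)@_(mu S0) = (-1)^+s0.
Proof.
move=> V0 U.
rewrite detCm raddf_sum [LHS](bigD1 s0) //= [X in _ + X = _]big1 ?addr0; last first.
  move=> s Hs; rewrite raddf_sum big1 // => f /famQ_valid Vf.
  rewrite /= mcoeff_sign mcoeffX; case: eqP => [E|]; last by rewrite mulr0.
  by case: (U s f Vf (mu_eq E)) => E2; rewrite E2 eqxx in Hs.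
rewrite raddf_sum (bigD1 S0) ?valid_famQ //= [X in _ + X = _]big1 ?addr0; last first.
  move=> f /andP [/famQ_valid Vf Hf].
  rewrite /= mcoeff_sign mcoeffX; case: eqP => [E|]; last by rewrite mulr0.
  by case: (U s0 f Vf (mu_eq E)) => _ E2; rewrite E2 eqxx in Hf.
by rewrite mcoeff_sign mcoeffX eqxx mulr1.
Qed.

Lemma supp_detCm : (forall j, exists i, j \notin Z i) ->
  forall m, m \in msupp (\det Cm) -> forall j, (m j <= k.-1)%N.
Proof.
move=> HZ m; rewrite detCm => /msupp_sum_le /flattenP [sl /mapP [s _ ->]].
move=> /msupp_sum_le /flattenP [sl' /mapP [f]]; rewrite mem_filter => /andP [Hf _] ->.
have Vf := famQ_valid Hf.
have -> : msupp ((-1) ^+ s * 'X_[mu f]) =i [:: mu f].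
  move=> x; rewrite mulr_sign; case: (odd_perm s); last by rewrite msuppX.
  by move=> y; rewrite (perm_mem (msuppN _)) msuppX.
rewrite inE => /eqP -> j; rewrite mu_mult /mult_union.
case: (HZ j) => i0 Hi0.
have : [set i | j \in f i] \subset [set~ i0].
  apply/subsetP => i; rewrite !inE; apply: contraTneq => ->.
  by apply: contra Hi0; case: (Vf i0) => /subsetP H _ /H.
move/subset_leq_card; rewrite cardsC1 card_ord //.
Qed.

End Det.

Section Code.
Variables (F : fieldType) (k n : nat) (al : 'I_n -> F).
Hypothesis ali : injective al.

Definition Vm : 'M[F]_(k, n) := \matrix_(s, j) ((-1)^+s * al j ^+ (k.-1 - s)).

Lemma key (w : 'rV[F]_k) : w != 0 -> leq #|[set j : 'I_n | (w *m Vm) 0 j == 0]| k.-1.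
Proof.
move=> w0.
pose g : {poly F} := \sum_(s < k) (w 0 s * (-1)^+s) *: 'X^(k.-1 - s).
have Eg j : (w *m Vm) 0 j = g.[al j].
  rewrite !mxE horner_sum; apply: eq_bigr => s _.
  by rewrite mxE hornerZ hornerXn mulrA.
have g0 : g != 0.
  case/rV0Pn: w0 => s1 Hs1; apply/eqP => /(congr1 (fun p : {poly F} => p`_(k.-1 - s1))).
  rewrite coef0 coef_sum (bigD1 s1) //= big1 ?addr0.
    by rewrite coefZ coefXn eqxx mulr1 => /eqP; rewrite mulf_eq0 signr_eq0 orbF (negbTE Hs1).
  move=> s Hs; rewrite coefZ coefXn; case: eqP => [E|]; last by rewrite mulr0.
  by case/eqP: Hs; apply: val_inj; move: (ltn_ord s) (ltn_ord s1) E => /=; lia.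
have sg : (size g <= k)%N.
  apply: (leq_trans (size_sum _ _ _)); apply/bigmax_leqP => s _.
  apply: (leq_trans (size_scale_leq _ _)); rewrite size_polyXn.
  by move: (ltn_ord s); lia.
set Zs := [set j : 'I_n | (w *m Vm) 0 j == 0].
have Ha : all (root g) [seq al j | j <- enum Zs].
  by apply/allP => x /mapP [j]; rewrite mem_enum inE Eg => /eqP H ->; apply/eqP.
have U : uniq [seq al j | j <- enum Zs] by rewrite (map_inj_uniq ali) enum_uniq.
have := max_poly_roots g0 Ha U; rewrite size_map -cardE => H; move: (leq_trans H sg); by case: (k).
Qed.

End Code.

Lemma prod_mesym1 (R : comNzRingType) n (a : 'I_n -> R) (S : {set 'I_n}) :
  \prod_i a i ^+ (mesym1 S i) = \prod_(i in S) a i.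
Proof.
rewrite [RHS]big_mkcond; apply: eq_bigr => i _; rewrite /mesym1 mnmE.
by case: (i \in S); rewrite ?expr1 ?expr0.
Qed.

Lemma zero_rowC k n (M : 'M[bool]_(k, n)) i : zero_row M i = ~: supp_row M i.
Proof. by apply/setP => j; rewrite !inE. Qed.

Lemma card_zero_row k n (M : 'M[bool]_(k, n)) i :
  (1 <= k <= n)%N -> #|supp_row M i| = (n - k + 1)%N -> #|zero_row M i| = k.-1.
Proof.
move=> /andP [k1 kn] H; have := cardsC (supp_row M i); rewrite card_ord -zero_rowC H.
lia.
Qed.

Lemma part1 (n k : nat) (M : 'M[bool]_(k, n)) :
     (1 <= k <= n)%N ->
     (forall i, #|supp_row M i| = (n - k + 1)%N) ->
     MDS_condition M ->
     unique_multiset_union (zero_row M) ->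
     forall F : finFieldType, (n + k - 1 <= #|F|)%N ->
       exists G : 'M[F]_(k, n), fits G M /\ MDS_generator G.
Proof.
move=> Hkn Hw Hmds [s0 [S0 [V0 U]]] F HF.
have /andP [k1 kn] := Hkn.
set Z := zero_row M.
have HZc i : #|Z i| = k.-1 by apply: card_zero_row.
have HZj j : exists i, j \notin Z i.
  suff /existsP [i Hi] : [exists i, j \notin Z i] by exists i.
  apply: contraT => /existsPn H.
  have T0 : [set: 'I_k] != set0 by apply/set0Pn; exists (Ordinal k1).
  have := Hmds _ T0; rewrite cardsT card_ord.
  have : \bigcup_(i in [set: 'I_k]) supp_row M i \subset [set~ j].
    apply/subsetP => x /bigcupP [i _]; rewrite !inE => Mx; apply/eqP => E.
    by move: (H i); rewrite /Z /zero_row inE -E Mx.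
  move/subset_leq_card; rewrite cardsC1 card_ord; lia.
have P0 : \det (Cm F Z) != 0.
  apply/eqP => E; move: (@coeff_detCm F _ _ _ _ _ V0 U); rewrite E mcoeff0 => /eqP.
  by rewrite eq_sym signr_eq0.
have HFd : (k.-1 + n <= #|F|)%N by lia.
have [al [ali Pal]] := alon HFd P0 (supp_detCm HZj).
pose Ca := map_mx (meval al) (Cm F Z).
have dCa : \det Ca = (\det (Cm F Z)).@[al] by rewrite det_map_mx.
have CaE i s : Ca i s = \sum_(S : {set 'I_n} | (S \subset Z i) && (#|S| == s)) \prod_(z in S) al z.
  rewrite /Ca !mxE rmorph_sum; apply: eq_bigr => S _.
  by rewrite /= mevalX prod_mesym1.
pose G := Ca *m Vm k al.
have GE i j : G i j = \prod_(z in Z i) (al j - al z).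
  rewrite prod_sub_expand HZc mxE.
  rewrite (partition_big (fun S : {set 'I_n} => (insubd (Ordinal k1) #|S| : 'I_k)) xpredT) //=.
  apply: eq_bigr => s _; rewrite CaE big_distrl /=.
  apply: eq_big => [S|S /andP [SZ /eqP Ss]].
    case SZ : (S \subset Z i) => //=.
    have Sk : (#|S| < k)%N.
      by have := subset_leq_card SZ; rewrite HZc; lia.
    apply/eqP/eqP => [E|E]; first by apply: val_inj; rewrite /= val_insubd Sk E.
    by rewrite -E val_insubd Sk.
  by rewrite mxE Ss mulrC.
have fitsG : fits G M.
  move=> i j Mij; rewrite GE (bigD1 j) /=; last by rewrite /Z /zero_row inE Mij.
  by rewrite subrr mul0r.
have Cau : Ca \in unitmx by rewrite unitmxE unitfE dCa.
have key2 (u : 'rV[F]_k) : u != 0 -> leq #|[set j : 'I_n | (u *m G) 0 j == 0]| k.-1.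
  move=> u0; rewrite /G mulmxA; apply: key => //.
  apply: contra u0 => /eqP E; apply/eqP.
  by rewrite -(mulmxK Cau u) E mul0mx.
have wt (c : 'rV[F]_n) : (c <= G)%MS -> c != 0 -> (n - k + 1 <= hweight c)%N.
  case/submxP => u -> c0.
  have u0 : u != 0 by apply: contra c0 => /eqP ->; rewrite mul0mx.
  have := key2 u u0; rewrite /hweight.
  have -> : [set j : 'I_n | (u *m G) 0 j != 0] = ~: [set j : 'I_n | (u *m G) 0 j == 0].
    by apply/setP => j; rewrite !inE.
  set Zs := [set j : 'I_n | (u *m G) 0 j == 0].
  move=> H1; have H2 := cardsC Zs; rewrite card_ord in H2.
  have H3 : #|Zs| = #|Zs| by [].
  move: H1 H2; move: #|Zs| #|~: Zs| => a b; lia.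
have rfG : row_free G.
  apply: inj_row_free => v Hv; apply/eqP; apply: contraT => v0.
  have := key2 v v0; rewrite Hv.
  have -> : [set j : 'I_n | (0 : 'rV[F]_n) 0 j == 0] = setT by apply/setP => j; rewrite !inE mxE eqxx.
  rewrite cardsT card_ord; lia.
exists G; split => //; split => //; split => //.
pose i0 : 'I_k := Ordinal k1.
have c0 : row i0 G != 0.
  rewrite rowE mulmx_free_eq0 //; apply/eqP => /matrixP /(_ 0 i0); rewrite !mxE !eqxx /=.
  by move/eqP; rewrite oner_eq0.
exists (row i0 G); first by split => //; exact: row_sub.
apply/eqP; rewrite eqn_leq wt ?row_sub // andbT /hweight.
have : [set j : 'I_n | row i0 G 0 j != 0] \subset ~: Z i0.
  apply/subsetP => j; rewrite inE mxE in_setC; apply: contra => jZ; apply/eqP.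
  by rewrite GE (bigD1 j jZ) /= subrr mul0r.
move/subset_leq_card => H1; have H2 := cardsC (Z i0); rewrite card_ord HZc in H2.
move: H1 H2; move: #|[set j : 'I_n | row i0 G 0 j != 0]| #|~: Z i0| => a b; lia.
Qed.

Lemma inter_cond k n (M : 'M[bool]_(k, n)) :
  (1 <= k <= n)%N -> MDS_condition M ->
  forall I : {set 'I_k}, I != set0 ->
    (#|\bigcap_(i in I) zero_row M i| <= k - #|I|)%N.
Proof.
move=> Hkn Hmds I I0.
have E : \bigcap_(i in I) zero_row M i = ~: \bigcup_(i in I) supp_row M i.
  apply/setP => j; rewrite in_setC; apply/bigcapP/negP => [H /bigcupP [i iI]|H i iI].
    by rewrite !inE => Mij; move: (H i iI); rewrite inE Mij.
  by rewrite inE; apply/negP => Mij; apply: H; apply/bigcupP; exists i => //; rewrite inE.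
have H1 := Hmds I I0; have H2 := cardsC (\bigcup_(i in I) supp_row M i).
have H3 : (#|I| <= k)%N by have := max_card I; rewrite card_ord.
rewrite card_ord -E in H2.
move: H1 H2 H3; move: #|\bigcup_(i in I) supp_row M i| #|\bigcap_(i in I) zero_row M i| #|I| => a b c.
lia.
Qed.

Local Close Scope ring_scope.

Theorem lemma3 :
  (forall (n k : nat) (M : 'M[bool]_(k, n)),
     (1 <= k <= n)%N ->
     (forall i, #|supp_row M i| = (n - k + 1)%N) ->
     MDS_condition M ->
     unique_multiset_union (zero_row M) ->
     forall F : finFieldType, (n + k - 1 <= #|F|)%N ->
       exists G : 'M[F]_(k, n), fits G M /\ MDS_generator G)
  /\
  ((forall (n k : nat), (1 <= k <= n)%N ->
      forall Z : 'I_k -> {set 'I_n},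
        (forall i, #|Z i| = (k - 1)%N) ->
        (forall I : {set 'I_k}, I != set0 ->
           (#|\bigcap_(i in I) Z i| <= k - #|I|)%N) ->
        unique_multiset_union Z) ->
   forall (n k : nat) (M : 'M[bool]_(k, n)),
     (1 <= k <= n)%N ->
     (forall i, #|supp_row M i| = (n - k + 1)%N) ->
     MDS_condition M ->
     forall F : finFieldType, (n + k - 1 <= #|F|)%N ->
       exists G : 'M[F]_(k, n), fits G M /\ MDS_generator G).
Proof.
split; first exact: part1.
move=> H n k M Hkn Hw Hmds; apply: part1 => //.
apply: H => // [i|]; last exact: inter_cond.
by rewrite subn1; apply: card_zero_row.
Qed.
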